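(* There is no universal first-order sentence $\varphi$ in the language of residuation algebras (and indeed none in the language of residuated lattices) such that for every residuation algebra $\mathbb{A}$ (resp. residuated lattice), $\mathbb{A}\models\varphi$ if and only if the dual structure $\mathbb{A}^\delta_+$ is functional. In particular, the complex algebra $(\mathcal{P}(\mathbb{Z}_3),\cap,\cup,\cdot,\backslash,/,\{0\})$ of the group $\mathbb{Z}_3$ has a functional (indeed total) dual structure, while its subalgebra with universe $\{\emptyset,\{0\},\{1,2\},\mathbb{Z}_3\}$ does not.
   Context: A residuation algebra is a structure $(A,\backslash,/)$ where $A$ is a bounded distributive lattice and $\backslash,/$ are binary operations on $A$ such that $\backslash$ preserves finite (including empty) meets in its second coordinate, $/$ preserves finite (including empty) meets in its first coordinate, and for all $a,b,c\in A$: $b\leq a\backslash c$ iff $a\leq c/b$; its language consists of the bounded lattice operations together with $\backslash$ and $/$. The canonical extension $A^\delta$ of $A$ is the dense and compact completion of $A$ (for finite $A$, $A^\delta=A$). The $\pi$-extensions $\backslash^\pi,/^\pi$ of $\backslash,/$ are defined by: for $k$ a meet of elements of $A$ and $o$ a join of elements of $A$, $k\backslash^\pi o=\bigvee\{a\backslash b\mid a,b\in A, k\leq a, b\leq o\}$, extended to arbitrary $u,v$ by $u\backslash^\pi v=\bigwedge\{k\backslash^\pi o\mid k\leq u, v\leq o\}$, and symmetrically for $/$. The product $\cdot$ on $A^\delta$ is the operation with $v\leq u\backslash^\pi w$ iff $u\cdot v\leq w$ iff $u\leq w/^\pi v$. $J^\infty(A^\delta)$ is the set of completely join-irreducible elements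 of $A^\delta$. $\mathbb{A}^\delta_+$ is functional if $y\cdot z\in J^\infty(A^\delta)\cup\{\bot\}$ for all $y,z\in J^\infty(A^\delta)$, and total if $y\cdot z\in J^\infty(A^\delta)$ for all such $y,z$. In the complex algebra of $\mathbb{Z}_3$: $X\cdot Y=\{x+y\mid x\in X,y\in Y\}$, $X\backslash Y=\{c\mid X\cdot\{c\}\subseteq Y\}$, $X/Y=\{c\mid\{c\}\cdot Y\subseteq X\}$. *)

(* Defs.v *)
From mathcomp Require Import all_boot all_order all_algebra.
Set Implicit Arguments. Unset Strict Implicit. Unset Printing Implicit Defensive.

Record ra_sig := RaSig {
  ra_car :> Type;
  ra_meet : ra_car -> ra_car -> ra_car;
  ra_join : ra_car -> ra_car -> ra_car;
  ra_bot : ra_car;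
  ra_top : ra_car;
  ra_ldiv : ra_car -> ra_car -> ra_car;
  ra_rdiv : ra_car -> ra_car -> ra_car
}.

Record rl_sig := RlSig {
  rl_ra :> ra_sig;
  rl_mul : rl_ra -> rl_ra -> rl_ra;
  rl_unit : rl_ra
}.

Section RaLaws.
Variable S : ra_sig.
Local Notation "x ∧ y" := (ra_meet x y) (at level 40, left associativity).
Local Notation "x ∨ y" := (ra_join x y) (at level 50, left associativity).

Definition ra_le (a b : S) : Prop := a ∧ b = a.

Definition is_bdl : Prop :=
  (forall a b c : S, a ∧ (b ∧ c) = (a ∧ b) ∧ c) /\
  (forall a b c : S, a ∨ (b ∨ c) = (a ∨ b) ∨ c) /\
  (forall a b : S, a ∧ b = b ∧ a) /\
  (forall a b : S, a ∨ b = b ∨ a) /\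
  (forall a b : S, a ∧ (a ∨ b) = a) /\
  (forall a b : S, a ∨ (a ∧ b) = a) /\
  (forall a : S, a ∧ ra_top S = a /\ a ∨ ra_bot S = a) /\
  (forall a b c : S, a ∧ (b ∨ c) = (a ∧ b) ∨ (a ∧ c)).

Definition is_resalg : Prop :=
  is_bdl /\
      (forall a b c : S, ra_ldiv a (b ∧ c) = ra_ldiv a b ∧ ra_ldiv a c) /\
      (forall a : S, ra_ldiv a (ra_top S) = ra_top S) /\
      (forall a b c : S, ra_rdiv (b ∧ c) a = ra_rdiv b a ∧ ra_rdiv c a) /\
      (forall a : S, ra_rdiv (ra_top S) a = ra_top S) /\
      (forall a b c : S, ra_le b (ra_ldiv a c) <-> ra_le a (ra_rdiv c b)).
End RaLaws.

(* residuated lattices whose lattice reduct is bounded distributive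
   (so that the residuation-algebra reduct and its dual are defined) *)
Definition is_rl (S : rl_sig) : Prop :=
  [/\ is_resalg S,
      (forall a b c : S, rl_mul a (rl_mul b c) = rl_mul (rl_mul a b) c),
      (forall a : S, rl_mul (rl_unit S) a = a /\ rl_mul a (rl_unit S) = a) &
      (forall a b c : S,
         (ra_le (rl_mul a b) c <-> ra_le b (ra_ldiv a c)) /\
         (ra_le (rl_mul a b) c <-> ra_le a (ra_rdiv c b)))].

(* A universal sentence  forall x_1 ... x_n, psi  (psi quantifier      *)
(* free) is represented by psi itself; its truth in an algebra is      *)
(* truth of psi under every assignment of the variables.               *)
Inductive rterm : Type :=
  | RVar of nat | RBot | RTop
  | RMeet of rterm & rterm | RJoin of rterm & rterm
  | RLdiv of rterm & rterm | RRdiv of rterm & rterm.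

Inductive lterm : Type :=
  | LVar of nat | LBot | LTop
  | LMeet of lterm & lterm | LJoin of lterm & lterm
  | LLdiv of lterm & lterm | LRdiv of lterm & lterm
  | LMul of lterm & lterm | LUnit.

Inductive qf (T : Type) : Type :=
  | QEq of T & T
  | QTrue | QFalse
  | QNot of qf T
  | QAnd of qf T & qf T
  | QOr of qf T & qf T
  | QImp of qf T & qf T.

Fixpoint qf_holds (T : Type) (E : T -> T -> Prop) (f : qf T) : Prop :=
  match f with
  | QEq t u => E t u
  | QTrue => True
  | QFalse => False
  | QNot g => ~ qf_holds E g
  | QAnd g h => qf_holds E g /\ qf_holds E h
  | QOr g h => qf_holds E g \/ qf_holds E h
  | QImp g h => qf_holds E g -> qf_holds E h
  end.

Fixpoint reval (S : ra_sig) (v : nat -> S) (t : rterm) : S :=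
  match t with
  | RVar n => v n
  | RBot => ra_bot S
  | RTop => ra_top S
  | RMeet t u => ra_meet (reval v t) (reval v u)
  | RJoin t u => ra_join (reval v t) (reval v u)
  | RLdiv t u => ra_ldiv (reval v t) (reval v u)
  | RRdiv t u => ra_rdiv (reval v t) (reval v u)
  end.

Fixpoint leval (S : rl_sig) (v : nat -> S) (t : lterm) : S :=
  match t with
  | LVar n => v n
  | LBot => ra_bot S
  | LTop => ra_top S
  | LMeet t u => ra_meet (leval v t) (leval v u)
  | LJoin t u => ra_join (leval v t) (leval v u)
  | LLdiv t u => ra_ldiv (leval v t) (leval v u)
  | LRdiv t u => ra_rdiv (leval v t) (leval v u)
  | LMul t u => rl_mul (leval v t) (leval v u)
  | LUnit => rl_unit S
  end.

Definition ra_models (S : ra_sig) (phi : qf rterm) : Prop :=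
  forall v : nat -> S, qf_holds (fun t u => reval v t = reval v u) phi.

Definition rl_models (S : rl_sig) (phi : qf lterm) : Prop :=
  forall v : nat -> S, qf_holds (fun t u => leval v t = leval v u) phi.

Fixpoint all_prop (T : Type) (X : T -> Prop) (s : seq T) : Prop :=
  match s with [::] => True | x :: s' => X x /\ all_prop X s' end.

Section CanExt.
Variable S : ra_sig.
Variables (C : Type) (le : C -> C -> Prop)
          (Sup Inf : (C -> Prop) -> C) (e : S -> C).

Definition is_complete_lattice : Prop :=
  [/\ (forall x, le x x),
      (forall x y, le x y -> le y x -> x = y),
      (forall x y z, le x y -> le y z -> le x z),
      (forall X x, X x -> le x (Sup X)) /\
      (forall X u, (forall x, X x -> le x u) -> le (Sup X) u) &
      (forall X x, X x -> le (Inf X) x) /\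
      (forall X u, (forall x, X x -> le u x) -> le u (Inf X))].

Definition img (X : S -> Prop) : C -> Prop := fun c => exists2 a, X a & c = e a.

Definition closedC (k : C) : Prop := exists X : S -> Prop, k = Inf (img X).
Definition openC (o : C) : Prop := exists X : S -> Prop, o = Sup (img X).

Definition is_canonical_ext : Prop :=
  is_complete_lattice /\
      (forall a b : S, le (e a) (e b) <-> ra_le a b) /\
      (forall a b : S, e (ra_meet a b) = Inf (fun c => c = e a \/ c = e b) /\
                       e (ra_join a b) = Sup (fun c => c = e a \/ c = e b)) /\
      (e (ra_bot S) = Sup (fun _ => False) /\ e (ra_top S) = Inf (fun _ => False)) /\
      (forall u, u = Sup (fun k => closedC k /\ le k u) /\
                 u = Inf (fun o => openC o /\ le u o)) /\
      (forall X Y : S -> Prop, le (Inf (img X)) (Sup (img Y)) ->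
         exists xs ys : seq S,
           [/\ all_prop X xs,
               all_prop Y ys &
               ra_le (foldr (@ra_meet S) (ra_top S) xs)
                     (foldr (@ra_join S) (ra_bot S) ys)]).

Definition pi_ldiv_ko (k o : C) : C :=
  Sup (fun x => exists a b : S, [/\ le k (e a), le (e b) o & x = e (ra_ldiv a b)]).
Definition pi_ldiv (u v : C) : C :=
  Inf (fun x => exists k o, [/\ closedC k, le k u, openC o, le v o & x = pi_ldiv_ko k o]).

(* pi-extension of / (monotone in the first, antitone in the second
   coordinate; symmetric to \) *)
Definition pi_rdiv_ok (o k : C) : C :=
  Sup (fun x => exists b a : S, [/\ le (e b) o, le k (e a) & x = e (ra_rdiv b a)]).
Definition pi_rdiv (u v : C) : C :=
  Inf (fun x => exists o k, [/\ openC o, le u o, closedC k, le k v & x = pi_rdiv_ok o k]).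

Definition is_product (pr : C -> C -> C) : Prop :=
  forall u v w, (le v (pi_ldiv u w) <-> le (pr u v) w) /\
                (le (pr u v) w <-> le u (pi_rdiv w v)).

Definition botC : C := Sup (fun _ => False).

Definition cji (j : C) : Prop := forall X : C -> Prop, j = Sup X -> X j.
End CanExt.

Definition dual_functional (S : ra_sig) : Prop :=
  forall (C : Type) (le : C -> C -> Prop) (Sup Inf : (C -> Prop) -> C) (e : S -> C),
    is_canonical_ext le Sup Inf e ->
    forall pr : C -> C -> C, is_product le Sup Inf e pr ->
    forall y z, cji Sup y -> cji Sup z ->
      cji Sup (pr y z) \/ pr y z = botC Sup.

Definition dual_total (S : ra_sig) : Prop :=
  forall (C : Type) (le : C -> C -> Prop) (Sup Inf : (C -> Prop) -> C) (e : S -> C),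
    is_canonical_ext le Sup Inf e ->
    forall pr : C -> C -> C, is_product le Sup Inf e pr ->
    forall y z, cji Sup y -> cji Sup z -> cji Sup (pr y z).

Definition ra_closed (S : ra_sig) (P : S -> bool) : Prop :=
  P (ra_bot S) /\ P (ra_top S) /\
      (forall a b, P a -> P b -> P (ra_meet a b)) /\
      (forall a b, P a -> P b -> P (ra_join a b)) /\
      (forall a b, P a -> P b -> P (ra_ldiv a b)) /\
      (forall a b, P a -> P b -> P (ra_rdiv a b)).

Definition rl_closed (S : rl_sig) (P : S -> bool) : Prop :=
  [/\ ra_closed P, P (rl_unit S) & (forall a b, P a -> P b -> P (rl_mul a b))].

Section Sub.
Variables (S : ra_sig) (P : S -> bool) (d : {x : S | P x}).
Definition sub_op (op : S -> S -> S) (a b : {x : S | P x}) : {x : S | P x} :=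
  match P (op (sval a) (sval b)) as c return P (op (sval a) (sval b)) = c -> {x : S | P x} with
  | true => fun h => exist (fun x => P x) _ h
  | false => fun _ => d
  end erefl.
Definition sub_cst (c : S) : {x : S | P x} :=
  match P c as b return P c = b -> {x : S | P x} with
  | true => fun h => exist (fun x => P x) _ h
  | false => fun _ => d
  end erefl.
(* the induced algebra on {x | P x}; it is the subalgebra with universe P
   whenever ra_closed P holds *)
Definition sub_ra : ra_sig :=
  @RaSig {x : S | P x} (sub_op (@ra_meet S)) (sub_op (@ra_join S))
         (sub_cst (ra_bot S)) (sub_cst (ra_top S))
         (sub_op (@ra_ldiv S)) (sub_op (@ra_rdiv S)).
End Sub.

Local Open Scope ring_scope.

Definition cx_mul (X Y : {set 'Z_3}) : {set 'Z_3} := [set x + y | x in X, y in Y].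
Definition cx_ldiv (X Y : {set 'Z_3}) : {set 'Z_3} := [set c | cx_mul X [set c] \subset Y].
Definition cx_rdiv (X Y : {set 'Z_3}) : {set 'Z_3} := [set c | cx_mul [set c] Y \subset X].

Definition Z3cx_ra : ra_sig :=
  @RaSig {set 'Z_3} (@setI _) (@setU _) set0 setT cx_ldiv cx_rdiv.

Definition Z3cx : rl_sig := @RlSig Z3cx_ra cx_mul [set 0].

Definition U4 : {set {set 'Z_3}} := [set set0; [set 0]; [set 1; 2]; setT].

Definition inU4 (X : Z3cx_ra) : bool := X \in U4.

Lemma set0_inU4 : inU4 set0.
Proof. by rewrite /inU4 !inE eqxx. Qed.

Definition Z3sub : ra_sig := sub_ra (exist (fun x => inU4 x) set0 set0_inU4).

(* Main.v *)
Require Import Defs.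
From mathcomp Require Import all_boot all_order all_algebra.
From Stdlib Require Import Classical ClassicalEpsilon.
Set Implicit Arguments. Unset Strict Implicit. Unset Printing Implicit Defensive.
Import GRing.Theory.
Local Open Scope ring_scope.

Lemma Z3E (x : 'Z_3) : [\/ x = 0, x = 1 | x = 2].
Proof.
case: x => [[|[|[|n]]] H].
- by constructor 1; apply: val_inj.
- by constructor 2; apply: val_inj.
- by constructor 3; apply: val_inj.
- by [].
Qed.

Lemma forallZ3 (P : 'Z_3 -> Prop) : P 0 -> P 1 -> P 2 -> forall x, P x.
Proof. by move=> H0 H1 H2 x; case: (Z3E x) => ->. Qed.

Lemma mem_cx_mul (A B : {set 'Z_3}) x :
  (x \in cx_mul A B) = [|| (0 \in A) && (x - 0 \in B), (1 \in A) && (x - 1 \in B)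
                         | (2 \in A) && (x - 2 \in B)].
Proof.
apply/idP/idP.
- case/imset2P => a b Ha Hb ->.
  have E : forall a b : 'Z_3, a + b - a = b by move=> ? ?; rewrite addrC addKr.
  by case: (Z3E a) Ha => -> Ha; rewrite E Ha Hb ?orbT.
- have K : forall a, x - a + a = x by move=> a; rewrite subrK.
  case/or3P => /andP [Ha Hb]; by apply/imset2P; apply: (Imset2spec Ha Hb); rewrite addrC K.
Qed.

Lemma mem_cx_ldiv (A C : {set 'Z_3}) x :
  (x \in cx_ldiv A C) = [&& (0 \in A) ==> (0 + x \in C), (1 \in A) ==> (1 + x \in C)
                         & (2 \in A) ==> (2 + x \in C)].
Proof.
rewrite inE; apply/subsetP/idP.
- move=> H; apply/and3P; split; apply/implyP => Ha; apply: H;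
    by apply/imset2P; apply: (Imset2spec Ha (set11 x)).
- move=> /and3P [H0 H1 H2] y /imset2P [a b Ha]; rewrite inE => /eqP -> ->.
  by case: (Z3E a) Ha => -> Ha; [move: H0|move: H1|move: H2]; rewrite Ha.
Qed.

Lemma mem_cx_rdiv (C B : {set 'Z_3}) x :
  (x \in cx_rdiv C B) = [&& (0 \in B) ==> (x + 0 \in C), (1 \in B) ==> (x + 1 \in C)
                         & (2 \in B) ==> (x + 2 \in C)].
Proof.
rewrite inE; apply/subsetP/idP.
- move=> H; apply/and3P; split; apply/implyP => Ha; apply: H;
    by apply/imset2P; apply: (Imset2spec (set11 x) Ha).
- move=> /and3P [H0 H1 H2] y /imset2P [a b]; rewrite inE => /eqP -> Hb ->.
  by case: (Z3E b) Hb => -> Hb; [move: H0|move: H1|move: H2]; rewrite Hb.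
Qed.

Definition mks (b0 b1 b2 : bool) : {set 'Z_3} :=
  [set x | [|| (x == 0) && b0, (x == 1) && b1 | (x == 2) && b2]].

Lemma setZ3E (A : {set 'Z_3}) : A = mks (0 \in A) (1 \in A) (2 \in A).
Proof. by apply/setP; apply: forallZ3; rewrite inE /= ?orbF. Qed.


Lemma mksE b0 b1 b2 : [/\ 0 \in mks b0 b1 b2 = b0, 1 \in mks b0 b1 b2 = b1
                       & 2 \in mks b0 b1 b2 = b2].
Proof. by rewrite !inE /= ?orbF. Qed.

Lemma eq_mks a0 a1 a2 c0 c1 c2 :
  (mks a0 a1 a2 == mks c0 c1 c2) = [&& a0 == c0, a1 == c1 & a2 == c2].
Proof.
apply/eqP/idP.
- move=> E; have [A0 A1 A2] := mksE a0 a1 a2; have [C0 C1 C2] := mksE c0 c1 c2.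
  rewrite E in A0 A1 A2; by rewrite -A0 -A1 -A2 C0 C1 C2 !eqxx.
- by case/and3P => /eqP -> /eqP -> /eqP ->.
Qed.

Lemma set0_mks : set0 = mks false false false.
Proof. by rewrite {1}(setZ3E set0) !inE. Qed.
Lemma setT_mks : setT = mks true true true.
Proof. by rewrite {1}(setZ3E setT) !inE. Qed.
Lemma set1_mks : [set 0] = mks true false false.
Proof. by rewrite {1}(setZ3E [set 0]) !inE. Qed.
Lemma set12_mks : [set 1; 2] = mks false true true.
Proof. by rewrite {1}(setZ3E [set 1; 2]) !inE. Qed.

Lemma inU4E A : inU4 A = ((1 \in A) == (2 \in A)).
Proof.
rewrite {1}(setZ3E A) /inU4 /U4 !inE set0_mks setT_mks set1_mks set12_mks !eq_mks.
by case: (0 \in A) (1 \in A) (2 \in A) => [] [] [].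
Qed.

Lemma subZ3 (A B : {set 'Z_3}) :
  (A \subset B) = [&& (0 \in A) ==> (0 \in B), (1 \in A) ==> (1 \in B) & (2 \in A) ==> (2 \in B)].
Proof.
apply/subsetP/and3P.
- by move=> H; split; apply/implyP; apply: H.
- case=> H0 H1 H2; apply: forallZ3; apply/implyP => //.
Qed.

Lemma eqZ3 (A B : {set 'Z_3}) :
  (0 \in A) = (0 \in B) -> (1 \in A) = (1 \in B) -> (2 \in A) = (2 \in B) -> A = B.
Proof. by move=> H0 H1 H2; rewrite (setZ3E A) (setZ3E B) H0 H1 H2. Qed.


Lemma z3n00 : (0 - 0 : 'Z_3) = 0. Proof. exact: val_inj. Qed.
Lemma z3n01 : (0 - 1 : 'Z_3) = 2. Proof. exact: val_inj. Qed.
Lemma z3n02 : (0 - 2 : 'Z_3) = 1. Proof. exact: val_inj. Qed.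
Lemma z3n10 : (1 - 0 : 'Z_3) = 1. Proof. exact: val_inj. Qed.
Lemma z3n11 : (1 - 1 : 'Z_3) = 0. Proof. exact: val_inj. Qed.
Lemma z3n12 : (1 - 2 : 'Z_3) = 2. Proof. exact: val_inj. Qed.
Lemma z3n20 : (2 - 0 : 'Z_3) = 2. Proof. exact: val_inj. Qed.
Lemma z3n21 : (2 - 1 : 'Z_3) = 1. Proof. exact: val_inj. Qed.
Lemma z3n22 : (2 - 2 : 'Z_3) = 0. Proof. exact: val_inj. Qed.
Lemma z3p00 : (0 + 0 : 'Z_3) = 0. Proof. exact: val_inj. Qed.
Lemma z3p01 : (0 + 1 : 'Z_3) = 1. Proof. exact: val_inj. Qed.
Lemma z3p02 : (0 + 2 : 'Z_3) = 2. Proof. exact: val_inj. Qed.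
Lemma z3p10 : (1 + 0 : 'Z_3) = 1. Proof. exact: val_inj. Qed.
Lemma z3p11 : (1 + 1 : 'Z_3) = 2. Proof. exact: val_inj. Qed.
Lemma z3p12 : (1 + 2 : 'Z_3) = 0. Proof. exact: val_inj. Qed.
Lemma z3p20 : (2 + 0 : 'Z_3) = 2. Proof. exact: val_inj. Qed.
Lemma z3p21 : (2 + 1 : 'Z_3) = 0. Proof. exact: val_inj. Qed.
Lemma z3p22 : (2 + 2 : 'Z_3) = 1. Proof. exact: val_inj. Qed.
Definition z3n := (z3n00, z3n01, z3n02, z3n10, z3n11, z3n12, z3n20, z3n21, z3n22,
  z3p00, z3p01, z3p02, z3p10, z3p11, z3p12, z3p20, z3p21, z3p22).

Lemma res_l (a b c : {set 'Z_3}) : (cx_mul a b \subset c) = (b \subset cx_ldiv a c).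
Proof.
rewrite !subZ3 !mem_cx_mul !mem_cx_ldiv !z3n.
move: (0 \in a) (1 \in a) (2 \in a) (0 \in b) (1 \in b) (2 \in b) (0 \in c) (1 \in c) (2 \in c).
by move=> [] [] [] [] [] [] [] [] [].
Qed.

Lemma res_r (a b c : {set 'Z_3}) : (cx_mul a b \subset c) = (a \subset cx_rdiv c b).
Proof.
rewrite !subZ3 !mem_cx_mul !mem_cx_rdiv !z3n.
move: (0 \in a) (1 \in a) (2 \in a) (0 \in b) (1 \in b) (2 \in b) (0 \in c) (1 \in c) (2 \in c).
by move=> [] [] [] [] [] [] [] [] [].
Qed.

Lemma cxmulA (a b c : {set 'Z_3}) : cx_mul a (cx_mul b c) = cx_mul (cx_mul a b) c.
Proof.
apply: eqZ3; rewrite !mem_cx_mul !z3n;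
move: (0 \in a) (1 \in a) (2 \in a) (0 \in b) (1 \in b) (2 \in b) (0 \in c) (1 \in c) (2 \in c);
by move=> [] [] [] [] [] [] [] [] [].
Qed.

Lemma cxmul1 (a : {set 'Z_3}) : cx_mul [set 0] a = a /\ cx_mul a [set 0] = a.
Proof.
split; apply: eqZ3; rewrite !mem_cx_mul !inE !z3n;
move: (0 \in a) (1 \in a) (2 \in a); by move=> [] [] [].
Qed.

Lemma leZ (x y : Z3cx_ra) : ra_le x y <-> x \subset y.
Proof. by split => /setIidPl. Qed.

Lemma mulZ (x y : 'Z_3) : cx_mul [set x] [set y] = [set x + y].
Proof.
apply/setP => z; rewrite mem_cx_mul !inE.
case: (Z3E x) => ->; case: (Z3E y) => ->; case: (Z3E z) => ->; by [].
Qed.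

Lemma is_rl_Z3 : is_rl Z3cx.
Proof.
split.
- split.
  split; [|split; [|split; [|split; [|split; [|split; [|split]]]]]];
    move=> *; (lazymatch goal with |- _ /\ _ => split | _ => idtac end); apply/setP => x; rewrite !inE;
    repeat match goal with |- context [?y \in ?a] => case: (y \in a) end; by [].
  split; [|split; [|split; [|split]]].
  + by move=> a b c; apply/setP => x; rewrite !inE subsetI.
  + by move=> a; apply/setP => x; rewrite !inE subsetT.
  + by move=> a b c; apply/setP => x; rewrite !inE subsetI.
  + by move=> a; apply/setP => x; rewrite !inE subsetT.
  + by move=> a b c; rewrite !leZ -res_l res_r.
- exact: cxmulA.
- exact: cxmul1.
- by move=> a b c; rewrite !leZ -res_l res_r.
Qed.

Definition pdec (P : Prop) : bool := if excluded_middle_informative P then true else false.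
Lemma pdecE (P : Prop) : pdec P <-> P.
Proof. by rewrite /pdec; case: excluded_middle_informative. Qed.

Section Gen.
Variable S : ra_sig.
Hypothesis bdl : is_bdl S.
Variable enumS : seq S.
Hypothesis enumP : forall a : S, List.In a enumS.
Variables (C : Type) (le : C -> C -> Prop) (Sup Inf : (C -> Prop) -> C) (e : S -> C).
Hypothesis CL : is_complete_lattice le Sup Inf.
Hypothesis emb : forall a b : S, le (e a) (e b) <-> ra_le a b.
Hypothesis pres : forall a b : S, e (ra_meet a b) = Inf (fun c => c = e a \/ c = e b) /\
                       e (ra_join a b) = Sup (fun c => c = e a \/ c = e b).
Hypothesis bt : e (ra_bot S) = Sup (fun _ => False) /\ e (ra_top S) = Inf (fun _ => False).

Lemma le_refl x : le x x. Proof. by case: CL => H _ _ _ _; apply: H. Qed.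
Lemma le_anti x y : le x y -> le y x -> x = y. Proof. by case: CL => _ H _ _ _; apply: H. Qed.
Lemma le_trans x y z : le x y -> le y z -> le x z. Proof. by move=> h1 h2; case: CL => _ _ H _ _; exact: H h1 h2. Qed.
Lemma Sup_ub X x : X x -> le x (Sup X). Proof. by case: CL => _ _ _ [H _] _; apply: H. Qed.
Lemma Sup_lub X u : (forall x, X x -> le x u) -> le (Sup X) u.
Proof. by case: CL => _ _ _ [_ H] _; apply: H. Qed.
Lemma Inf_lb X x : X x -> le (Inf X) x. Proof. by case: CL => _ _ _ _ [H _]; apply: H. Qed.
Lemma Inf_glb X u : (forall x, X x -> le u x) -> le u (Inf X).
Proof. by case: CL => _ _ _ _ [_ H]; apply: H. Qed.

Lemma Sup_eq X u : X u -> (forall x, X x -> le x u) -> Sup X = u.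
Proof. by move=> Xu H; apply: le_anti; [apply: Sup_lub | apply: Sup_ub]. Qed.
Lemma Inf_eq X u : X u -> (forall x, X x -> le u x) -> Inf X = u.
Proof. by move=> Xu H; apply: le_anti; [apply: Inf_lb | apply: Inf_glb]. Qed.

Lemma ra_refl (a : S) : ra_le a a. Proof. by apply/emb/le_refl. Qed.
Lemma ra_trans (a b c : S) : ra_le a b -> ra_le b c -> ra_le a c.
Proof. by move=> /emb H1 /emb H2; apply/emb; apply: le_trans H1 H2. Qed.
Lemma e_inj (a b : S) : e a = e b -> a = b.
Proof.
move=> E; have /emb H1 : le (e a) (e b) by rewrite E; apply: le_refl.
have /emb H2 : le (e b) (e a) by rewrite E; apply: le_refl.
by case: bdl => _ [_ [Hc _]]; rewrite /ra_le in H1 H2; rewrite -H1 Hc H2.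
Qed.

Definition filt (X : S -> Prop) := [seq a <- enumS | pdec (X a)].
Lemma filtP X a : List.In a (filt X) <-> X a.
Proof.
rewrite /filt; split.
- elim: enumS => //= b s IH; case Hb: (pdec (X b)) => //=.
  case=> [<-|H]; [exact/pdecE | exact: IH].
- move=> Xa; have := enumP a; elim: enumS => //= b s IH.
  case Hb: (pdec (X b)) => /=.
  + by case=> [->|H]; [left | right; apply: IH].
  + case=> [Eb|H]; last exact: IH.
    by subst b; move: Hb; have /pdecE -> := Xa.
Qed.

Lemma filt_all X : all_prop X (filt X).
Proof.
have : forall a, List.In a (filt X) -> X a by move=> a /filtP.
elim: (filt X) => //= a s IH H; split; [by apply: H; left | apply: IH => b Hb; apply: H; by right].
Qed.

Definition bigM (xs : seq S) := foldr (@ra_meet S) (ra_top S) xs.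
Definition bigJ (xs : seq S) := foldr (@ra_join S) (ra_bot S) xs.

Lemma e_bigM_lb xs a : List.In a xs -> le (e (bigM xs)) (e a).
Proof.
elim: xs => //= b s IH [<-|H]; rewrite (proj1 (pres _ _)).
- by apply: Inf_lb; left.
- apply: le_trans (IH H); by apply: Inf_lb; right.
Qed.
Lemma e_bigM_glb u xs : (forall a, List.In a xs -> le u (e a)) -> le u (e (bigM xs)).
Proof.
elim: xs => /= [|b s IH] H.
- by rewrite (proj2 bt); apply: Inf_glb.
- rewrite (proj1 (pres _ _)); apply: Inf_glb => x [->|->].
  + by apply: H; left.
  + by apply: IH => a Ha; apply: H; right.
Qed.
Lemma e_bigJ_ub xs a : List.In a xs -> le (e a) (e (bigJ xs)).
Proof.
elim: xs => //= b s IH [<-|H]; rewrite (proj2 (pres _ _)).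
- by apply: Sup_ub; left.
- apply: le_trans (IH H) _; by apply: Sup_ub; right.
Qed.
Lemma e_bigJ_lub u xs : (forall a, List.In a xs -> le (e a) u) -> le (e (bigJ xs)) u.
Proof.
elim: xs => /= [|b s IH] H.
- by rewrite (proj1 bt); apply: Sup_lub.
- rewrite (proj2 (pres _ _)); apply: Sup_lub => x [->|->].
  + by apply: H; left.
  + by apply: IH => a Ha; apply: H; right.
Qed.

Lemma Inf_img X : Inf (img e X) = e (bigM (filt X)).
Proof.
apply: le_anti.
- apply: e_bigM_glb => a /filtP Xa; apply: Inf_lb; by exists a.
- apply: Inf_glb => x [a Xa ->]; apply: e_bigM_lb; exact/filtP.
Qed.
Lemma Sup_img X : Sup (img e X) = e (bigJ (filt X)).
Proof.
apply: le_anti.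
- apply: Sup_lub => x [a Xa ->]; apply: e_bigJ_ub; exact/filtP.
- apply: e_bigJ_lub => a /filtP Xa; apply: Sup_ub; by exists a.
Qed.

Lemma closed_e (a : S) : closedC Inf e (e a).
Proof.
exists (fun x => x = a); symmetry; apply: Inf_eq; first by exists a.
by move=> x [b -> ->]; apply: le_refl.
Qed.
Lemma open_e (a : S) : openC Sup e (e a).
Proof.
exists (fun x => x = a); symmetry; apply: Sup_eq; first by exists a.
by move=> x [b -> ->]; apply: le_refl.
Qed.

Lemma closed_img k : closedC Inf e k -> exists a, k = e a.
Proof. by case=> X ->; rewrite Inf_img; eexists. Qed.
Lemma open_img k : openC Sup e k -> exists a, k = e a.
Proof. by case=> X ->; rewrite Sup_img; eexists. Qed.

Lemma surj_of_dens :
  (forall u, u = Sup (fun k => closedC Inf e k /\ le k u)) -> forall u, exists a, u = e a.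
Proof.
move=> D u; exists (bigJ (filt (fun a => le (e a) u))); rewrite -Sup_img.
apply: le_anti.
- rewrite {1}(D u); apply: Sup_lub => k [/closed_img [a ->] Hk]; apply: Sup_ub; by exists a.
- by apply: Sup_lub => x [a Ha ->].
Qed.

Lemma canext_of_surj : (forall u, exists a, u = e a) -> is_canonical_ext le Sup Inf e.
Proof.
move=> Su; split; first exact: CL.
split; first exact: emb.
split; first exact: pres.
split; first exact: bt.
split.
- move=> u; have [a ->] := Su u; split.
  + symmetry; apply: Sup_eq; first by split; [apply: closed_e | apply: le_refl].
    by move=> x [].
  + symmetry; apply: Inf_eq; first by split; [apply: open_e | apply: le_refl].
    by move=> x [].
- move=> X Y; rewrite Inf_img Sup_img => /emb H.
  by exists (filt X), (filt Y); split; [apply: filt_all | apply: filt_all | ].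
Qed.


Lemma cji_join (a b c : S) : c = ra_join a b -> e c <> e a -> e c <> e b -> ~ cji Sup (e c).
Proof.
move=> Ec Na Nb H.
have E : e c = Sup (fun x => x = e a \/ x = e b) by rewrite Ec; exact: (proj2 (pres a b)).
by case: (H _ E).
Qed.

Lemma cji_bot : ~ cji Sup (e (ra_bot S)).
Proof. by move=> H; apply: (H (fun _ => False)); exact: (proj1 bt). Qed.

Lemma botC_e : botC Sup = e (ra_bot S).
Proof. by rewrite /botC (proj1 bt). Qed.

Hypothesis RA : is_resalg S.
Hypothesis Su : forall u, exists a, u = e a.

Lemma Hres (a b c : S) : ra_le b (ra_ldiv a c) <-> ra_le a (ra_rdiv c b).
Proof. by case: RA => _ [_ [_ [_ [_ H]]]]; apply: H. Qed.

Lemma ldiv_mono2 (a c c' : S) : ra_le c c' -> ra_le (ra_ldiv a c) (ra_ldiv a c').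
Proof. by case: RA => _ [Hl _]; rewrite /ra_le => H; rewrite -Hl H. Qed.
Lemma rdiv_mono1 (a b b' : S) : ra_le b b' -> ra_le (ra_rdiv b a) (ra_rdiv b' a).
Proof. by case: RA => _ [_ [_ [Hr _]]]; rewrite /ra_le => H; rewrite -Hr H. Qed.
Lemma ldiv_anti1 (a a' c : S) : ra_le a' a -> ra_le (ra_ldiv a c) (ra_ldiv a' c).
Proof.
move=> H; apply/Hres; apply: ra_trans H _; apply/Hres; exact: ra_refl.
Qed.
Lemma rdiv_anti2 (c a a' : S) : ra_le a' a -> ra_le (ra_rdiv c a) (ra_rdiv c a').
Proof.
move=> H; apply/(Hres (ra_rdiv c a) a' c); apply: ra_trans H _.
apply/(Hres (ra_rdiv c a) a c); exact: ra_refl.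
Qed.

Lemma ko_e (a c : S) : pi_ldiv_ko le Sup e (e a) (e c) = e (ra_ldiv a c).
Proof.
apply: Sup_eq; first by exists a, c; split => //; apply: le_refl.
move=> x [a' [b [/emb H1 /emb H2 ->]]]; apply/emb.
apply: ra_trans (ldiv_anti1 _ H1) (ldiv_mono2 _ H2).
Qed.

Lemma pi_ldiv_e (a c : S) : pi_ldiv le Sup Inf e (e a) (e c) = e (ra_ldiv a c).
Proof.
apply: Inf_eq.
- exists (e a), (e c); split; [exact: closed_e | exact: le_refl | exact: open_e
   | exact: le_refl | by rewrite ko_e].
- move=> x [k [o [/closed_img [a' ->] /emb Hk /open_img [c' ->] /emb Ho ->]]].
  rewrite ko_e; apply/emb; exact: ra_trans (ldiv_mono2 _ Ho) (ldiv_anti1 _ Hk).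
Qed.

Lemma ok_e (c b : S) : pi_rdiv_ok le Sup e (e c) (e b) = e (ra_rdiv c b).
Proof.
apply: Sup_eq; first by exists c, b; split => //; apply: le_refl.
move=> x [b' [a' [/emb H1 /emb H2 ->]]]; apply/emb.
exact: ra_trans (rdiv_mono1 _ H1) (rdiv_anti2 _ H2).
Qed.

Lemma pi_rdiv_e (c b : S) : pi_rdiv le Sup Inf e (e c) (e b) = e (ra_rdiv c b).
Proof.
apply: Inf_eq.
- exists (e c), (e b); split; [exact: open_e | exact: le_refl | exact: closed_e
   | exact: le_refl | by rewrite ok_e].
- move=> x [o [k [/open_img [c' ->] /emb Ho /closed_img [b' ->] /emb Hk ->]]].
  rewrite ok_e; apply/emb; exact: ra_trans (rdiv_mono1 _ Ho) (rdiv_anti2 _ Hk).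
Qed.

Lemma prod_e pr : is_product le Sup Inf e pr ->
  forall (a b m : S), (forall c, ra_le m c <-> ra_le b (ra_ldiv a c)) -> pr (e a) (e b) = e m.
Proof.
move=> Hp a b m Hm; have [p Ep] := Su (pr (e a) (e b)); rewrite Ep.
apply: le_anti.
- rewrite -Ep; apply/(proj1 (Hp _ _ _)); rewrite pi_ldiv_e; apply/emb/Hm; exact: ra_refl.
- apply/emb/Hm/emb; rewrite -pi_ldiv_e; apply/(proj1 (Hp _ _ _)); rewrite -Ep; exact: le_refl.
Qed.

Lemma prod_mk pr (m : S -> S -> S) : (forall a b, pr (e a) (e b) = e (m a b)) ->
  (forall a b c, (ra_le b (ra_ldiv a c) <-> ra_le (m a b) c) /\
                 (ra_le (m a b) c <-> ra_le a (ra_rdiv c b))) ->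
  is_product le Sup Inf e pr.
Proof.
move=> Hpr Hm u v w; have [a ->] := Su u; have [b ->] := Su v; have [c ->] := Su w.
by rewrite Hpr pi_ldiv_e pi_rdiv_e !emb; apply: Hm.
Qed.

End Gen.

Lemma memIn (T : eqType) (x : T) (s : seq T) : x \in s -> List.In x s.
Proof.
elim: s => //= y s IH; rewrite inE => /orP [/eqP ->|H]; [by left | by right; apply: IH].
Qed.

Lemma enumZ (a : Z3cx_ra) : List.In a (enum {set 'Z_3}).
Proof. by apply: memIn; rewrite mem_enum. Qed.

Lemma RA_Z3 : is_resalg Z3cx_ra.
Proof. by case: is_rl_Z3. Qed.

Lemma total_Z3 : dual_total Z3cx.
Proof.
move=> C le Sup Inf e [CL [emb [pres [bt [dens _]]]]] pr Hp.
have bdl := proj1 RA_Z3.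
have Su := surj_of_dens enumZ CL pres bt (fun u => proj1 (dens u)).
have cji1 : forall x : 'Z_3, cji Sup (e [set x]).
  move=> x X EX; apply: NNPP => NX.
  have : le (e [set x]) (e set0).
    rewrite {1}EX; apply: (Sup_lub CL) => u Xu; have [b Eb] := Su u.
    have : le (e b) (e [set x]) by rewrite -Eb EX; apply: (Sup_ub CL).
    move/emb/leZ; rewrite subset1 => /orP [/eqP Eb'|/eqP Eb'].
    - by case: NX; rewrite -Eb' -Eb.
    - by rewrite Eb Eb'; apply: (le_refl CL).
  move/emb/leZ/subsetP => /(_ x); rewrite !inE eqxx => /(_ isT).
  by [].
have cjiE : forall a : Z3cx_ra, cji Sup (e a) -> exists x, a = [set x].
  move=> a Ha; case: (set_0Vmem a) => [E|[x xa]].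
  - by move: Ha; rewrite E; move/(cji_bot bt).
  - case: (eqVneq a [set x]) => [->|Nx]; first by exists x.
    exfalso; apply: (cji_join (a := [set x]) (b := a :\ x) pres _ _ _ Ha).
    + by rewrite /= setD1K.
    + by move/(e_inj bdl CL emb) => E; move: Nx; rewrite E eqxx.
    + move/(e_inj bdl CL emb) => E; move: xa; rewrite {1}E !inE eqxx.
      by [].
move=> y z Hy Hz.
have [a Ea] := Su y; have [b Eb] := Su z.
rewrite Ea in Hy; rewrite Eb in Hz.
have [x Ex] := cjiE _ Hy; have [x' Ex'] := cjiE _ Hz.
rewrite Ea Eb Ex Ex' (prod_e enumZ CL emb pres bt RA_Z3 Su Hp (m := [set x + x'])).
- exact: cji1.
- by move=> c; rewrite !leZ -mulZ res_l.
Qed.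

Lemma functional_Z3 : dual_functional Z3cx.
Proof.
move=> C le Sup Inf e H pr Hp y z Hy Hz; left; exact: (total_Z3 H Hp Hy Hz).
Qed.

Lemma match_val (S : ra_sig) (P : S -> bool) (d : {x : S | P x}) (y : S) (b : bool)
  (e : P y = b) : P y ->
  sval ((if b as c return P y = c -> {x : S | P x}
         then fun h => exist (fun x => P x) y h else fun _ => d) e) = y.
Proof. by case: b e => // e; rewrite e. Qed.

Lemma sub_opE (S : ra_sig) (P : S -> bool) d op (a b : {x : S | P x}) :
  P (op (sval a) (sval b)) -> sval (sub_op d op a b) = op (sval a) (sval b).
Proof. move=> H; exact: (match_val d (erefl _) H). Qed.

Lemma sub_cstE (S : ra_sig) (P : S -> bool) d (c : S) :
  P c -> sval (sub_cst (P := P) d c) = c.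
Proof. move=> H; exact: (match_val d (erefl _) H). Qed.

Definition T4 := {x : Z3cx_ra | inU4 x}.
Definition d0 : T4 := exist (fun x => inU4 x) set0 set0_inU4.

Lemma sv_inj (a b : T4) : sval a = sval b -> a = b.
Proof.
case: a b => [x hx] [y hy] /= E; subst y; congr exist; apply: bool_irrelevance.
Qed.

Ltac bitsU := rewrite ?inU4E => /eqP Ha /eqP Hb.

Lemma cl_meet a b : inU4 a -> inU4 b -> inU4 (a :&: b).
Proof.
rewrite !inU4E !inE => /eqP -> /eqP ->; by rewrite eqxx.
Qed.
Lemma cl_join a b : inU4 a -> inU4 b -> inU4 (a :|: b).
Proof.
rewrite !inU4E !inE => /eqP -> /eqP ->; by rewrite eqxx.
Qed.
Lemma cl_ldiv a b : inU4 a -> inU4 b -> inU4 (cx_ldiv a b).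
Proof.
rewrite !inU4E !mem_cx_ldiv !z3n => /eqP -> /eqP ->.
move: (0 \in a) (2 \in a) (0 \in b) (2 \in b); by move=> [] [] [] [].
Qed.
Lemma cl_rdiv a b : inU4 a -> inU4 b -> inU4 (cx_rdiv a b).
Proof.
rewrite !inU4E !mem_cx_rdiv !z3n => /eqP -> /eqP ->.
move: (0 \in a) (2 \in a) (0 \in b) (2 \in b); by move=> [] [] [] [].
Qed.
Lemma cl_mul a b : inU4 a -> inU4 b -> inU4 (cx_mul a b).
Proof.
rewrite !inU4E !mem_cx_mul !z3n => /eqP -> /eqP ->.
move: (0 \in a) (2 \in a) (0 \in b) (2 \in b); by move=> [] [] [] [].
Qed.
Lemma cl_0 : inU4 set0. Proof. by rewrite inU4E !inE. Qed.
Lemma cl_T : inU4 setT. Proof. by rewrite inU4E !inE. Qed.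
Lemma cl_1 : inU4 [set 0]. Proof. by rewrite inU4E !inE. Qed.

Lemma closed_U4 : rl_closed (S := Z3cx) inU4.
Proof.
split.
- split; [exact: cl_0|split; [exact: cl_T|split; [exact: cl_meet|split; [exact: cl_join
   |split; [exact: cl_ldiv|exact: cl_rdiv]]]]].
- exact: cl_1.
- exact: cl_mul.
Qed.

Definition Z3subrl : rl_sig := @RlSig Z3sub (sub_op d0 cx_mul) (sub_cst d0 [set 0]).

Lemma vmeet (a b : Z3sub) : sval (ra_meet a b) = sval a :&: sval b.
Proof. apply: sub_opE; exact: cl_meet (svalP a) (svalP b). Qed.
Lemma vjoin (a b : Z3sub) : sval (ra_join a b) = sval a :|: sval b.
Proof. apply: sub_opE; exact: cl_join (svalP a) (svalP b). Qed.
Lemma vldiv (a b : Z3sub) : sval (ra_ldiv a b) = cx_ldiv (sval a) (sval b).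
Proof. apply: sub_opE; exact: cl_ldiv (svalP a) (svalP b). Qed.
Lemma vrdiv (a b : Z3sub) : sval (ra_rdiv a b) = cx_rdiv (sval a) (sval b).
Proof. apply: sub_opE; exact: cl_rdiv (svalP a) (svalP b). Qed.
Lemma vmul (a b : Z3subrl) : sval (rl_mul a b) = cx_mul (sval a) (sval b).
Proof. apply: sub_opE; exact: cl_mul (svalP a) (svalP b). Qed.
Lemma vbot : sval (ra_bot Z3sub) = set0.
Proof. by apply: sub_cstE; apply: cl_0. Qed.
Lemma vtop : sval (ra_top Z3sub) = setT.
Proof. by apply: sub_cstE; apply: cl_T. Qed.
Lemma vunit : sval (rl_unit Z3subrl) = [set 0].
Proof. by apply: sub_cstE; apply: cl_1. Qed.

Definition vE := (vmeet, vjoin, vldiv, vrdiv, vbot, vtop).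

Lemma leS (a b : Z3sub) : ra_le a b <-> sval a \subset sval b.
Proof.
split.
- by move=> H; apply/setIidPl; rewrite -vmeet H.
- by move/setIidPl => H; apply: sv_inj; rewrite vmeet.
Qed.

Lemma RA_sub : is_resalg Z3sub.
Proof.
have [[A1 [A2 [A3 [A4 [A5 [A6 [A7 A8]]]]]]] [L1 [L2 [R1 [R2 Res]]]]] := RA_Z3.
split.
  split; [|split; [|split; [|split; [|split; [|split; [|split]]]]]];
    try (move=> *; apply: sv_inj; rewrite ?vE; by [apply: A1|apply: A2|apply: A3|apply: A4
        |apply: A5|apply: A6|apply: A8]).
  by move=> a; split; apply: sv_inj; rewrite ?vE; [apply: (proj1 (A7 _))|apply: (proj2 (A7 _))].
split; [|split; [|split; [|split]]].
- by move=> *; apply: sv_inj; rewrite !vE; apply: L1.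
- by move=> *; apply: sv_inj; rewrite !vE; apply: L2.
- by move=> *; apply: sv_inj; rewrite !vE; apply: R1.
- by move=> *; apply: sv_inj; rewrite !vE; apply: R2.
- by move=> a b c; rewrite !leS !vE -!leZ; apply: Res.
Qed.

Lemma RL_sub : is_rl Z3subrl.
Proof.
split.
- exact: RA_sub.
- by move=> a b c; apply: sv_inj; rewrite !vmul cxmulA.
- by move=> a; split; apply: sv_inj; rewrite !vmul vunit; case: (cxmul1 (sval a)).
- by move=> a b c; rewrite !leS !vE !vmul -res_l -res_r.
Qed.

Lemma qf_iff T (E E' : T -> T -> Prop) (f : qf T) :
  (forall t u, E t u <-> E' t u) -> (qf_holds E f <-> qf_holds E' f).
Proof.
move=> H; elim: f => /=; first exact: H; intros; tauto.
Qed.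

Lemma reval_sub (v : nat -> Z3sub) t :
  sval (reval v t) = reval (S := Z3cx_ra) (fun n => sval (v n)) t.
Proof. by elim: t => //= [|| t IHt u IHu| t IHt u IHu| t IHt u IHu| t IHt u IHu]; rewrite ?vE ?IHt ?IHu. Qed.

Lemma leval_sub (v : nat -> Z3subrl) t :
  sval (leval v t) = leval (S := Z3cx) (fun n => sval (v n)) t.
Proof.
by elim: t => //= [|| t IHt u IHu| t IHt u IHu| t IHt u IHu| t IHt u IHu | t IHt u IHu|];
  rewrite ?vE ?vmul ?vunit ?IHt ?IHu.
Qed.

Lemma models_sub phi : ra_models Z3cx_ra phi -> ra_models Z3sub phi.
Proof.
move=> H v; have := H (fun n => sval (v n)); apply: (proj1 (qf_iff _ _)) => t u.
split => [E|E]; last by rewrite -!reval_sub E.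
by apply: sv_inj; rewrite !reval_sub.
Qed.

Lemma lmodels_sub phi : rl_models Z3cx phi -> rl_models Z3subrl phi.
Proof.
move=> H v; have := H (fun n => sval (v n)); apply: (proj1 (qf_iff _ _)) => t u.
split => [E|E]; last by rewrite -!leval_sub E.
by apply: sv_inj; rewrite !leval_sub.
Qed.

Definition leT (u v : T4) : Prop := sval u \subset sval v.
Definition Qfam (X : T4 -> Prop) (A : {set 'Z_3}) : bool := pdec (exists2 u, X u & sval u = A).

Lemma Qfam_U4 X A : Qfam X A -> inU4 A.
Proof. by move/pdecE => [u _ <-]; exact: (svalP u). Qed.

Lemma bigU4 (Q : pred {set 'Z_3}) : (forall A, Q A -> inU4 A) ->
  inU4 (\bigcup_(A | Q A) A) /\ inU4 (\bigcap_(A | Q A) A).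
Proof.
move=> H; rewrite !inU4E; split; apply/eqP.
- apply/bigcupP/bigcupP => [][A QA HA]; exists A => //; move: (H A QA) HA;
    rewrite inU4E => /eqP E; by rewrite E.
- apply/bigcapP/bigcapP => H' A QA; have := H' A QA; move: (H A QA);
    rewrite inU4E => /eqP E; by rewrite E.
Qed.

Definition SupT (X : T4 -> Prop) : T4 :=
  exist (fun x => inU4 x) (\bigcup_(A | Qfam X A) A) (proj1 (bigU4 (@Qfam_U4 X))).
Definition InfT (X : T4 -> Prop) : T4 :=
  exist (fun x => inU4 x) (\bigcap_(A | Qfam X A) A) (proj2 (bigU4 (@Qfam_U4 X))).

Lemma CLT : is_complete_lattice leT SupT InfT.
Proof.
split.
- by move=> x; apply: subxx.
- move=> x y H1 H2; apply: sv_inj; apply/eqP; rewrite eqEsubset; exact/andP.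
- by move=> x y z; apply: subset_trans.
- split.
  + move=> X x Xx; rewrite /leT /=; apply: (bigcup_sup (sval x)); apply/pdecE; by exists x.
  + move=> X u H; rewrite /leT /=; apply/bigcupsP => A /pdecE [v Xv <-]; exact: H.
- split.
  + move=> X x Xx; rewrite /leT /=; apply: (bigcap_inf (sval x)); apply/pdecE; by exists x.
  + move=> X u H; rewrite /leT /=; apply/bigcapsP => A /pdecE [v Xv <-]; exact: H.
Qed.

Lemma embT (a b : Z3sub) : leT a b <-> ra_le a b.
Proof. by rewrite leS. Qed.

Lemma presT (a b : Z3sub) :
  (a : T4) = ra_meet a b -> True.
Proof. by []. Qed.

Lemma presT' (a b : Z3sub) :
  (ra_meet a b : T4) = InfT (fun c => c = a \/ c = b) /\
  (ra_join a b : T4) = SupT (fun c => c = a \/ c = b).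
Proof.
split; apply: sv_inj; rewrite ?vmeet ?vjoin /=; apply/eqP; rewrite eqEsubset; apply/andP; split.
- apply/bigcapsP => A /pdecE [u [->|->] <-]; [exact: subsetIl|exact: subsetIr].
- rewrite subsetI; apply/andP; split; [apply: (bigcap_inf (sval a)) | apply: (bigcap_inf (sval b))]; apply/pdecE;
    [by exists a => //; left | by exists b => //; right].
- rewrite subUset; apply/andP; split; [apply: (bigcup_sup (sval a)) | apply: (bigcup_sup (sval b))]; apply/pdecE;
    [by exists a => //; left | by exists b => //; right].
- apply/bigcupsP => A /pdecE [u [->|->] <-]; [exact: subsetUl|exact: subsetUr].
Qed.

Lemma btT : (ra_bot Z3sub : T4) = SupT (fun _ => False) /\
            (ra_top Z3sub : T4) = InfT (fun _ => False).
Proof.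
split; apply: sv_inj; rewrite ?vbot ?vtop /=; apply/eqP; rewrite eqEsubset; apply/andP; split.
- exact: sub0set.
- by apply/bigcupsP => A /pdecE [u []].
- by apply/bigcapsP => A /pdecE [u []].
- exact: subsetT.
Qed.

Lemma inmap (T : eqType) U (f : T -> U) x s : x \in s -> List.In (f x) (map f s).
Proof.
elim: s => //= y s IH; rewrite inE => /orP [/eqP ->|H]; [by left | by right; apply: IH].
Qed.

Definition enumT4 : seq Z3sub := [seq sub_cst d0 A | A <- enum {set 'Z_3}].
Lemma enumT4P (u : Z3sub) : List.In u enumT4.
Proof.
have -> : u = sub_cst d0 (sval u) by apply: sv_inj; rewrite sub_cstE //; exact: (svalP u).
by apply: inmap; rewrite mem_enum.
Qed.

Lemma surjT (u : T4) : exists a : Z3sub, u = id a.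
Proof. by exists u. Qed.

Lemma canT : is_canonical_ext leT SupT InfT (fun a : Z3sub => a : T4).
Proof. exact: (canext_of_surj enumT4P CLT embT presT' btT surjT). Qed.

Definition prT (u v : T4) : T4 := rl_mul (r := Z3subrl) u v.

Lemma prodT : is_product leT SupT InfT (fun a : Z3sub => a : T4) prT.
Proof.
apply: (prod_mk enumT4P CLT embT presT' btT RA_sub surjT (m := prT)) => // a b c.
have [_ _ _ H] := RL_sub; have [H1 H2] := H a b c.
by split; [rewrite H1|rewrite -H2].
Qed.

Lemma in12 : inU4 [set 1; 2]. Proof. by rewrite inU4E !inE. Qed.
Lemma in0 : inU4 [set 0]. Proof. by rewrite inU4E !inE. Qed.
Definition H12 : T4 := exist (fun x => inU4 x) [set 1; 2] in12.
Definition H0 : T4 := exist (fun x => inU4 x) [set 0] in0.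

Lemma low12 (B : {set 'Z_3}) : inU4 B -> B \subset [set 1; 2] -> B = set0 \/ B = [set 1; 2].
Proof.
rewrite inU4E subZ3 !inE.
case h0: (0 \in B); case h1: (1 \in B); case h2: (2 \in B) => //= _ _;
  [right|left]; apply: eqZ3; by rewrite ?h0 ?h1 ?h2 !inE.
Qed.

Lemma cjiH : cji SupT H12.
Proof.
move=> X EX; apply: NNPP => NX.
have : sval H12 \subset set0.
  rewrite {1}EX /=; apply/bigcupsP => A /pdecE [u Xu <-].
  have Hu : sval u \subset [set 1; 2].
    have -> : [set 1; 2] = sval H12 by [].
    rewrite EX /=; apply: (bigcup_sup (sval u)); apply/pdecE; by exists u.
  case: (low12 (svalP u) Hu) => E; first by rewrite E.
  by case: NX; have <- : u = H12 by apply: sv_inj.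
by move/subsetP/(_ 1); rewrite !inE => /(_ isT).
Qed.

Lemma prHH : prT H12 H12 = ra_top Z3sub.
Proof.
apply: sv_inj; rewrite /prT vmul vtop /=; apply: eqZ3; by rewrite !mem_cx_mul !inE.
Qed.

Lemma not_func_sub : ~ dual_functional Z3sub.
Proof.
move=> HF; case: (HF T4 leT SupT InfT (fun a : Z3sub => a : T4) canT prT prodT H12 H12 cjiH cjiH);
  rewrite prHH.
- apply: (cji_join (a := H0) (b := H12) presT').
  + apply: sv_inj; rewrite vjoin vtop /=; apply: eqZ3; by rewrite !inE.
  + by move/(f_equal sval); rewrite vtop /= => /setP /(_ 1); rewrite !inE.
  + by move/(f_equal sval); rewrite vtop /= => /setP /(_ 0); rewrite !inE.
- rewrite (botC_e btT) => /(f_equal sval); rewrite vtop vbot => /setP /(_ 0).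
  by rewrite !inE.
Qed.

Theorem mainTheorem5 :
  (~ exists phi : qf rterm,
       forall S : ra_sig, is_resalg S -> (ra_models S phi <-> dual_functional S)) /\
  (~ exists phi : qf lterm,
       forall S : rl_sig, is_rl S -> (rl_models S phi <-> dual_functional S)) /\
  is_rl Z3cx /\ dual_functional Z3cx /\ dual_total Z3cx /\
  rl_closed (S := Z3cx) inU4 /\ ~ dual_functional Z3sub.
Proof.
split; [|split; [|split; [exact: is_rl_Z3|split; [exact: functional_Z3|split;
  [exact: total_Z3|split; [exact: closed_U4|exact: not_func_sub]]]]]].
- case=> phi H; apply: not_func_sub; apply/(H _ RA_sub); apply: models_sub.
  by apply/(H _ RA_Z3); exact: functional_Z3.
- case=> phi H; apply: not_func_sub.
  have -> : Z3sub = rl_ra Z3subrl by [].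
  apply/(H _ RL_sub); apply: lmodels_sub.
  by apply/(H _ is_rl_Z3); exact: functional_Z3.
Qed.
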